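(* Let $G=(V,w,m)$ be a locally finite weighted graph having the hypercube shell structure $HSS(N,W,x_0)$ for some $N,W>0$ and $x_0\in V$. Then for every integer $n\ge0$, $$m(S_n(x_0))=m(x_0)\binom Nn,$$ where $m(A)=\sum_{x\in A}m(x)$ and $\binom Nn=\frac{N(N-1)\cdots(N-n+1)}{n!}$.
   Context: A weighted graph is $G=(V,w,m)$ with $V$ countable, $w:V\times V\to[0,\infty)$ symmetric with $w(x,x)=0$, $m:V\to(0,\infty)$; $x\sim y$ iff $w(x,y)>0$. $\operatorname{Deg}(x)=\frac1{m(x)}\sum_yw(x,y)$. $d$ is the combinatorial distance, $S_n(x)=\{y:d(x,y)=n\}$. $d_-^{x_0}(z)=\sum_{y\sim z,\ d(y,x_0)<d(z,x_0)}\frac{w(y,z)}{m(z)}$. $HSS(N,W,x_0)$: (i) $\operatorname{Deg}(x)=NW$ for all $x\in V$; (ii) $G$ is bipartite; (iii) $d_-^{x_0}(x)=W\,d(x,x_0)$ for all $x\in V$. *)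

(* Defs.v *)
From HB Require Import structures.
From mathcomp Require Import all_boot all_order all_algebra.
From Stdlib Require Import ClassicalEpsilon.
Set Implicit Arguments. Unset Strict Implicit. Unset Printing Implicit Defensive.
Import Order.TTheory GRing.Theory Num.Theory.
Local Open Scope ring_scope.

Section WG.
Variables (R : realFieldType) (V : countType).

(* Sum of f over the set {x | P x}, assumed finite: picks (classically) a
   duplicate-free enumeration of P (meaningless if P is infinite). *)
Definition finsum (P : V -> Prop) (f : V -> R) : R :=
  let s := epsilon (inhabits [::])
             (fun s : seq V => uniq s /\ forall x, x \in s <-> P x) in
  \sum_(x <- s) f x.

Variables (w : V -> V -> R) (m : V -> R).

Definition adj : rel V := fun x y => 0 < w x y.

Definition weighted_graph : Prop :=
  (forall x y, w x y = w y x) /\ (forall x y, 0 <= w x y) /\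
  (forall x, w x x = 0) /\ (forall x, 0 < m x).

Definition locally_finite : Prop :=
  forall x, exists s : seq V, forall y, adj x y -> y \in s.

Definition walk (x y : V) (n : nat) : Prop :=
  exists p : seq V, size p = n /\ path adj x p /\ last x p = y.

Definition dist (x y : V) (n : nat) : Prop :=
  walk x y n /\ forall k, (k < n)%N -> ~ walk x y k.

(* Deg(x) = (1/m(x)) sum_y w(x,y)  (sum over neighbours; other terms vanish) *)
Definition Deg (x : V) : R := (finsum (fun y => adj x y) (fun y => w x y)) / m x.

Definition dminus (x0 z : V) : R :=
  finsum (fun y => adj y z /\ exists k n, dist y x0 k /\ dist z x0 n /\ (k < n)%N)
         (fun y => w y z / m z).

Definition bipartite : Prop :=
  exists c : V -> bool, forall x y, adj x y -> c x != c y.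

Definition HSS (N W : R) (x0 : V) : Prop :=
  (forall x, Deg x = N * W) /\ bipartite /\
  (forall x, exists n : nat, dist x x0 n /\ dminus x0 x = W * n%:R).

Definition mS (x0 : V) (n : nat) : R := finsum (fun x => dist x x0 n) m.

End WG.

Definition gbinom (R : realFieldType) (N : R) (n : nat) : R :=
  (\prod_(i < n) (N - i%:R)) / (n`!)%:R.

(* Main.v *)
Require Import Defs.
From HB Require Import structures.
From mathcomp Require Import all_boot all_order all_algebra.
From Stdlib Require Import ClassicalEpsilon.
From mathcomp Require Import zify ring lra.
Import Order.TTheory GRing.Theory Num.Theory.
Local Open Scope ring_scope.
Set Implicit Arguments. Unset Strict Implicit. Unset Printing Implicit Defensive.

Lemma finsum_eq (R : realFieldType) (V : countType) (P : V -> Prop) (f : V -> R) s :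
  uniq s -> (forall x, x \in s <-> P x) -> finsum P f = \sum_(x <- s) f x.
Proof.
move=> us hs; rewrite /finsum; cbv zeta.
set Q := (fun s : seq V => uniq s /\ (forall x, x \in s <-> P x)).
have [us' hs'] : Q (epsilon (inhabits [::]) Q) by apply: epsilon_spec; exists s.
apply: perm_big; apply: uniq_perm => // x.
by apply/idP/idP => [/hs' /hs|/hs /hs'].
Qed.

Lemma sum_perm_filter (R : realFieldType) (V : countType) (s1 s2 : seq V)
  (P1 P2 : pred V) (f : V -> R) :
  uniq s1 -> uniq s2 -> (forall x, (x \in s1) && P1 x = (x \in s2) && P2 x) ->
  \sum_(x <- s1 | P1 x) f x = \sum_(x <- s2 | P2 x) f x.
Proof.
move=> u1 u2 h; rewrite -big_filter -[RHS]big_filter; apply: perm_big.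
apply: uniq_perm; rewrite ?filter_uniq // => x.
by rewrite !mem_filter [P1 x && _]andbC h; apply: andbC.
Qed.

Lemma walk_cons (R : realFieldType) (V : countType) (w : V -> V -> R) x y z n :
  adj w x z -> walk w z y n -> walk w x y n.+1.
Proof.
move=> hxz [p [sp [pp lp]]]; exists (z :: p); split; first by rewrite /= sp.
by split => //=; rewrite hxz pp.
Qed.

Lemma walk_uncons (R : realFieldType) (V : countType) (w : V -> V -> R) x y n :
  walk w x y n.+1 -> exists z, adj w x z /\ walk w z y n.
Proof.
move=> [[|z p] [//= sp [/andP[h1 h2] lp]]].
exists z; split => //; exists p; split; [by case: sp|split => //].
Qed.

Lemma walk0 (R : realFieldType) (V : countType) (w : V -> V -> R) x y :
  walk w x y 0 -> x = y.
Proof. by move=> [[|z p] [//= _ [_ lp]]]. Qed.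

Lemma walk_color (R : realFieldType) (V : countType) (w : V -> V -> R) (c : V -> bool) :
  (forall a b, adj w a b -> c a != c b) ->
  forall n x y, walk w x y n -> c y = odd n (+) c x.
Proof.
move=> hc; elim=> [|n IH] x y.
  by move/walk0 => ->.
move/walk_uncons=> [z [hxz hw]]; rewrite (IH _ _ hw).
move: (hc _ _ hxz); rewrite /=.
by case: (c x); case: (c z); case: (odd n).
Qed.

Lemma dist_uniq (R : realFieldType) (V : countType) (w : V -> V -> R) x y a b :
  dist w x y a -> dist w x y b -> a = b.
Proof.
move=> [wa ha] [wb hb]; case: (ltngtP a b) => // h.
  by case: (hb _ h wa).
by case: (ha _ h wb).
Qed.

Theorem proposition2 (R : realFieldType) (V : countType)
  (w : V -> V -> R) (m : V -> R) (N W : R) (x0 : V) :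
  weighted_graph w m -> locally_finite w ->
  0 < N -> 0 < W -> HSS w m N W x0 ->
  forall n : nat, mS w m x0 n = m x0 * gbinom N n.
Proof.
move=> [hsym [hpos [hdiag hm]]] hlf hN hW [h1 [[c hc] h3]].
have hd : forall x, {n : nat | dist w x x0 n /\ dminus w m x0 x = W * n%:R}.
  move=> x; apply: constructive_indefinite_description; exact: h3.
pose d x := sval (hd x).
have dP x : dist w x x0 (d x) by rewrite /d; case: (hd x) => ? [].
have dmP x : dminus w m x0 x = W * (d x)%:R by rewrite /d; case: (hd x) => ? [].
have dE x k : dist w x x0 k <-> k = d x.
  by split => [h|->//]; apply: dist_uniq h (dP x).
have dmin x k : walk w x x0 k -> (d x <= k)%N.
  by move=> hw; rewrite leqNgt; apply/negP => hlt; exact: ((dP x).2 k hlt hw).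
have adjC x y : adj w x y = adj w y x by rewrite /adj hsym.
have wz x y : ~~ adj w x y -> w x y = 0.
  by move=> h; apply/eqP; rewrite eq_le hpos andbT leNgt.
have mz x : m x != 0 by rewrite gt_eqF.
have nbr y z : adj w y z -> (d y = (d z).+1 \/ d z = (d y).+1)%N.
  move=> hyz.
  have l1 := dmin _ _ (walk_cons hyz (dP z).1).
  have l2 : (d z <= (d y).+1)%N by apply: dmin; apply: (walk_cons _ (dP y).1); rewrite adjC.
  have e1 := walk_color hc (dP y).1; have e2 := walk_color hc (dP z).1.
  have ne : d y <> d z.
    move=> e; move: (hc _ _ hyz) e1 e2; rewrite e => + ->.
    by case: (c y); case: (c z); case: (odd _).
  lia.
have hnb x : {s : seq V | uniq s /\ forall y, y \in s <-> adj w x y}.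
  apply: constructive_indefinite_description.
  have [s hs] := hlf x; exists (filter (adj w x) (undup s)).
  split; first by rewrite filter_uniq ?undup_uniq.
  move=> y; rewrite mem_filter mem_undup; split => [/andP[]//|h].
  by rewrite h (hs _ h).
pose nb x := sval (hnb x).
have nbU x : uniq (nb x) by rewrite /nb; case: (hnb x) => ? [].
have nbP x y : y \in nb x <-> adj w x y by rewrite /nb; case: (hnb x) => ? [].
have dx0 : d x0 = 0%N.
  by apply/esym/dE; split; [exists [::] | ].
have hS n : exists s : seq V, uniq s /\ forall x, x \in s <-> d x = n.
  elim: n => [|n [s [us hs]]].
    exists [:: x0]; split => // x; rewrite inE; split => [/eqP->//|h].
    by have := (dP x).1; rewrite h => /walk0 ->.
  exists (undup (filter (fun y => d y == n.+1) (flatten (map nb s)))).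
  split; first exact: undup_uniq.
  move=> y; rewrite mem_undup mem_filter; split => [/andP[/eqP]//|h].
  rewrite h eqxx /=; apply/flattenP.
  have := (dP y).1; rewrite h => /walk_uncons [z [hyz wz']].
  have l := dmin _ _ wz'.
  have ez : d z = n by case: (nbr _ _ hyz); lia.
  exists (nb z); first by apply/mapP; exists z => //; apply/hs.
  by apply/nbP; rewrite adjC.
have hA z : \sum_(y <- nb z) w z y = m z * (N * W).
  have := h1 z; rewrite /Deg (finsum_eq _ (nbU z)) => [e|y]; last exact: nbP.
  by rewrite -e mulrC divfK.
have hB z : \sum_(y <- nb z | (d y < d z)%N) w z y = m z * (W * (d z)%:R).
  have := dmP z; rewrite /dminus.
  rewrite (finsum_eq _ (s := filter (fun y => (d y < d z)%N) (nb z))).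
  - rewrite -mulr_suml big_filter => e; rewrite -e mulrC divfK //.
    by apply: eq_bigr => y _; rewrite hsym.
  - by rewrite filter_uniq.
  move=> y; rewrite mem_filter; split.
    move=> /andP[hl /nbP ha]; split; first by rewrite adjC.
    by exists (d y), (d z); split; [exact: dP|split; [exact: dP|]].
  move=> [ha [k [n' [hk [hn' hl]]]]].
  move/dE: hk => ek; move/dE: hn' => en; rewrite -ek -en hl /=; apply/nbP; by rewrite adjC.
have hC z : \sum_(y <- nb z | ~~ (d y < d z)%N) w z y = m z * W * (N - (d z)%:R).
  have := hA z; rewrite (bigID (fun y => (d y < d z)%N)) /= hB => e.
  apply: (addrI (m z * (W * (d z)%:R))); rewrite e; ring.
have hD n sn1 z : uniq sn1 -> (forall x, x \in sn1 <-> d x = n.+1) -> d z = n ->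
    \sum_(y <- nb z | ~~ (d y < d z)%N) w z y = \sum_(y <- sn1) w z y.
  move=> u1 h1' hz.
  rewrite [RHS](bigID (adj w z)) /= [X in _ = _ + X]big1 ?addr0; last first.
    by move=> y hy; apply: wz.
  apply: sum_perm_filter => // y; apply/andP/andP.
    move=> [/nbP ha hl]; split; last by [].
    by apply/h1'; case: (nbr _ _ ha); lia.
  move=> [/h1' hy ha]; split; first by apply/nbP.
  lia.
have hE n sn y : uniq sn -> (forall x, x \in sn <-> d x = n) -> d y = n.+1 ->
    \sum_(z <- sn) w z y = m y * (W * (n.+1)%:R).
  move=> u h' hy; rewrite -hy -hB.
  rewrite [LHS](bigID (adj w y)) /= [X in _ + X = _]big1 ?addr0; last first.
    by move=> z hz; rewrite hsym; apply: wz.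
  rewrite [RHS](eq_bigr (fun z => w z y)); last by move=> z _; rewrite hsym.
  apply: sum_perm_filter => // z; apply/andP/andP.
    move=> [/h' hz ha]; split; first by apply/nbP.
    lia.
  move=> [/nbP ha hl]; split; last exact: ha.
  by apply/h'; case: (nbr _ _ ha); lia.
have mSE n s : uniq s -> (forall x, x \in s <-> d x = n) -> mS w m x0 n = \sum_(x <- s) m x.
  move=> u h'; rewrite /mS; apply: finsum_eq => // x; rewrite h'.
  by split => e; [rewrite -e; exact: dP | apply/esym/dE].
have rec n : W * (N - n%:R) * mS w m x0 n = W * (n.+1)%:R * mS w m x0 n.+1.
  have [sn [un hn]] := hS n; have [sn1 [un1 hn1]] := hS n.+1.
  rewrite (mSE _ _ un hn) (mSE _ _ un1 hn1) !mulr_sumr.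
  transitivity (\sum_(z <- sn) \sum_(y <- sn1) w z y).
    rewrite big_seq_cond [RHS]big_seq_cond; apply: eq_bigr => z /andP[/hn hz _].
    by rewrite -(hD _ _ _ un1 hn1 hz) hC hz; ring.
  rewrite exchange_big /= big_seq_cond [RHS]big_seq_cond; apply: eq_bigr => y /andP[/hn1 hy _].
  by rewrite (hE _ _ _ un hn hy); ring.
elim=> [|n IH].
  rewrite (mSE 0%N [:: x0]) //.
    by rewrite big_seq1 /gbinom big_ord0 /= divr1 mulr1.
  move=> x; rewrite inE; split => [/eqP->//|h].
  by have := (dP x).1; rewrite h => /walk0 ->.
have := rec n; rewrite IH /gbinom big_ord_recr factS natrM /= => e.
have hW0 : W != 0 by rewrite gt_eqF.
have hn0 : (n.+1)%:R != 0 :> R by rewrite pnatr_eq0.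
have hf0 : (n`!)%:R != 0 :> R by rewrite pnatr_eq0 -lt0n fact_gt0.
apply: (mulfI (mulf_neq0 hW0 hn0)); rewrite -e.
field.
by rewrite hf0 addrC natr1 hn0.
Qed.
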